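(* Let $G_3$ be the graph with vertices $v_1,\dots,v_8$ and edges $a_1=v_1v_2$, $a_2=v_2v_3$, $a_3=v_3v_4$, $a_4=v_4v_5$, $a_5=v_1v_5$, $a_6=v_1v_8$, $a_7=v_2v_6$, $a_8=v_3v_6$, $a_9=v_4v_7$, $a_{10}=v_5v_8$, $a_{11}=v_6v_7$, $a_{12}=v_7v_8$. Let $\gamma_1=e_1+e_3+e_{10}+e_{11}$, $\gamma_2=e_2+e_4+e_6+e_{11}$, $\gamma_3=e_3+e_5+e_7+e_{12}$, $\gamma_4=e_2+e_5+e_6+e_7+e_8+2e_9+e_{10}$, $\gamma_5=e_2+e_3+e_5+e_6+e_7+e_9+e_{10}+e_{11}$, and for $(k_1,\dots,k_5)\in\mathbb{R}^5$ put $\gamma(k)=\sum_{i=1}^5k_i\gamma_i$. Consider the following properties of $(k_1,\dots,k_5)$, each of which includes $k_1,k_2,k_3,k_4\in\mathbb{N}$: $P_a$: $k_5\in\mathbb{N}$; $P_b$: $-k_5\in\mathbb{P}$ and $\min\{k_1,k_4\}\ge -k_5$; $P_{c_1}$: $-k_5\in\mathbb{P}$, $\min\{k_1,k_4\}<-k_5$, $k_1\ge k_4$; $P_{c_2}$: $-k_5\in\mathbb{P}$, $\min\{k_1,k_4\}<-k_5$, $k_1<k_4$, $2k_1+k_5\ge0$; $P_{c_3}$: $-k_5\in\mathbb{P}$, $\min\{k_1,k_4\}<-k_5$, $k_1<k_4$, $2k_1+k_5<0$. For each $h\in\{a,b,c_1,c_2,c_3\}$ define $(l_1,\dots,l_5)$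 from $(k_1,\dots,k_5)$ by: $h=a$: $(k_1,\ k_2,\ k_3,\ k_4,\ k_5)$; $h=b$: $(k_1+k_5,\ k_2,\ k_3,\ k_4+k_5,\ -k_5-1)$; $h=c_1$: $(k_1-k_4,\ k_2+k_4+k_5,\ k_3+k_4+k_5,\ -k_5-k_4-1,\ 2k_4+k_5)$; $h=c_2$: $(k_2+k_1+k_5,\ k_3+k_1+k_5,\ k_4-k_1-1,\ -k_5-k_1-1,\ 2k_1+k_5)$; $h=c_3$: $(k_2+k_1+k_5,\ k_3+k_1+k_5,\ k_4+k_1+k_5,\ k_1,\ -k_5-2k_1-1)$. Then for each $h$, the set $P_h(S(G_3))$ of $(k_1,\dots,k_5)\in\mathbb{R}^5$ with $\gamma(k)\in S(G_3)$ satisfying $P_h$ equals $\{(l_1,\dots,l_5)\in\mathbb{N}^5\}$ with the $l_i$ given above; that is, $(k_1,\dots,k_5)\in\mathbb{R}^5$ satisfies $\gamma(k)\in S(G_3)$ and $P_h$ if and only if the corresponding $l_1,\dots,l_5$ all lie in $\mathbb{N}$.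
   Context: For a finite graph $G$ with edges $a_1,\dots,a_n$, $S_{\mathbb{R}}(G)$ is the set of vectors $(\alpha_1,\dots,\alpha_n)\in\mathbb{R}^n$ (real labels on edges) such that for every vertex the sum of the labels of incident edges is the same number $s$; magic labellings form $S(G)=S_{\mathbb{R}}(G)\cap\mathbb{N}^n$. For $G_3$, every element of $S_{\mathbb{R}}(G_3)$ is uniquely of the form $\gamma(k)$. $e_i$ is the $i$-th unit vector of $\mathbb{R}^{12}$, $\mathbb{N}=\{0,1,2,\dots\}$, $\mathbb{P}=\{1,2,\dots\}$. *)

(* Defs.v *)
From Stdlib Require Import Reals Lra Lia List.
Import ListNotations.
Open Scope R_scope.

Definition isN (x : R) : Prop := exists n : nat, x = INR n.
Definition isP (x : R) : Prop := exists n : nat, x = INR (S n).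

(* The graph G_3: edge a_i is the (i-1)-th entry (vertices v_1..v_8). *)
Definition G3_edges : list (nat * nat) :=
  [(1,2); (2,3); (3,4); (4,5); (1,5); (1,8);
   (2,6); (3,6); (4,7); (5,8); (6,7); (7,8)]%nat.

Definition incident (v i : nat) : bool :=
  let (a, b) := nth (i - 1) G3_edges (0%nat, 0%nat) in
  Nat.eqb a v || Nat.eqb b v.

(* A labelling is a vector (alpha_1,...,alpha_12), encoded as alpha : nat -> R
   read at indices 1..12. *)
Definition vertex_sum (alpha : nat -> R) (v : nat) : R :=
  sum_f_R0 (fun j => if incident v (S j) then alpha (S j) else 0) 11.

Definition in_SR (alpha : nat -> R) : Prop :=
  exists s : R, forall v : nat, (1 <= v <= 8)%nat -> vertex_sum alpha v = s.

Definition in_S (alpha : nat -> R) : Prop :=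
  in_SR alpha /\ forall i : nat, (1 <= i <= 12)%nat -> isN (alpha i).

Definition e (i j : nat) : R := if Nat.eqb i j then 1 else 0.

Definition gamma1 (j : nat) : R := e 1 j + e 3 j + e 10 j + e 11 j.
Definition gamma2 (j : nat) : R := e 2 j + e 4 j + e 6 j + e 11 j.
Definition gamma3 (j : nat) : R := e 3 j + e 5 j + e 7 j + e 12 j.
Definition gamma4 (j : nat) : R :=
  e 2 j + e 5 j + e 6 j + e 7 j + e 8 j + 2 * e 9 j + e 10 j.
Definition gamma5 (j : nat) : R :=
  e 2 j + e 3 j + e 5 j + e 6 j + e 7 j + e 9 j + e 10 j + e 11 j.

Definition gamma (k1 k2 k3 k4 k5 : R) (j : nat) : R :=
  k1 * gamma1 j + k2 * gamma2 j + k3 * gamma3 j + k4 * gamma4 j + k5 * gamma5 j.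

Inductive hcase : Type := Ha | Hb | Hc1 | Hc2 | Hc3.

Definition Pprop (h : hcase) (k1 k2 k3 k4 k5 : R) : Prop :=
  isN k1 /\ isN k2 /\ isN k3 /\ isN k4 /\
  match h with
  | Ha => isN k5
  | Hb => isP (- k5) /\ Rmin k1 k4 >= - k5
  | Hc1 => isP (- k5) /\ Rmin k1 k4 < - k5 /\ k1 >= k4
  | Hc2 => isP (- k5) /\ Rmin k1 k4 < - k5 /\ k1 < k4 /\ 2 * k1 + k5 >= 0
  | Hc3 => isP (- k5) /\ Rmin k1 k4 < - k5 /\ k1 < k4 /\ 2 * k1 + k5 < 0
  end.

Definition lvals (h : hcase) (k1 k2 k3 k4 k5 : R) : list R :=
  match h with
  | Ha => [k1; k2; k3; k4; k5]
  | Hb => [k1 + k5; k2; k3; k4 + k5; - k5 - 1]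
  | Hc1 => [k1 - k4; k2 + k4 + k5; k3 + k4 + k5; - k5 - k4 - 1; 2 * k4 + k5]
  | Hc2 => [k2 + k1 + k5; k3 + k1 + k5; k4 - k1 - 1; - k5 - k1 - 1; 2 * k1 + k5]
  | Hc3 => [k2 + k1 + k5; k3 + k1 + k5; k4 + k1 + k5; k1; - k5 - 2 * k1 - 1]
  end.

(* Main.v *)
Require Import Defs.
From Stdlib Require Import Reals List.
From Stdlib Require Import Lra Lia ZArith.
Import ListNotations.
Open Scope R_scope.

Lemma isN_IZR z : isN (IZR z) <-> (0 <= z)%Z.
Proof.
  split.
  - intros [n Hn]. rewrite INR_IZR_INZ in Hn. apply eq_IZR in Hn. lia.
  - intros Hz. exists (Z.to_nat z). rewrite INR_IZR_INZ, Z2Nat.id; auto.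
Qed.

Lemma isP_IZR z : isP (IZR z) <-> (0 < z)%Z.
Proof.
  split.
  - intros [n Hn]. rewrite INR_IZR_INZ in Hn. apply eq_IZR in Hn. lia.
  - intros Hz. exists (Z.to_nat (z - 1)). rewrite INR_IZR_INZ.
    f_equal. lia.
Qed.

Lemma Rlt_IZR_iff a b : IZR a < IZR b <-> (a < b)%Z.
Proof. split; [apply lt_IZR | apply IZR_lt]. Qed.

Lemma Rge_IZR_iff a b : IZR a >= IZR b <-> (a >= b)%Z.
Proof. split; [intro H; apply Rge_le in H; apply le_IZR in H; lia | intro; apply IZR_ge; auto]. Qed.

Lemma Rmin_IZR a b : Rmin (IZR a) (IZR b) = IZR (Z.min a b).
Proof.
  unfold Rmin; destruct (Rle_dec (IZR a) (IZR b)) as [H|H].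
  - apply le_IZR in H. rewrite Z.min_l; auto.
  - assert (b <= a)%Z. { destruct (Z_le_gt_dec b a); auto. exfalso; apply H; apply IZR_le; lia. }
    rewrite Z.min_r; auto.
Qed.

Lemma Forall5 (P : R -> Prop) a b c d f :
  Forall P [a; b; c; d; f] <-> P a /\ P b /\ P c /\ P d /\ P f.
Proof.
  split.
  - intro H. repeat match goal with H : Forall _ (_ :: _) |- _ => inversion H; subst; clear H end.
    tauto.
  - intros (?&?&?&?&?). repeat constructor; auto.
Qed.

Lemma inS_R k1 k2 k3 k4 k5 :
  in_S (gamma k1 k2 k3 k4 k5) <->
  isN k1 /\ isN k2 /\ isN k3 /\ isN k4 /\ isN (k2 + k4 + k5) /\ isN (k1 + k3 + k5)
  /\ isN (k3 + k4 + k5) /\ isN (2 * k4 + k5) /\ isN (k1 + k4 + k5) /\ isN (k1 + k2 + k5).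
Proof.
  assert (G : forall j, (1 <= j <= 12)%nat ->
    gamma k1 k2 k3 k4 k5 j =
    match j with
    | 1 => (k1)%R | 2 => (k2 + k4 + k5)%R | 3 => (k1 + k3 + k5)%R | 4 => (k2)%R
    | 5 => (k3 + k4 + k5)%R | 6 => (k2 + k4 + k5)%R | 7 => (k3 + k4 + k5)%R | 8 => (k4)%R
    | 9 => (2 * k4 + k5)%R | 10 => (k1 + k4 + k5)%R | 11 => (k1 + k2 + k5)%R | _ => (k3)%R end%nat).
  { intros j Hj.
    destruct j as [|j]; [lia|].
    do 12 (destruct j as [|j]; [unfold gamma, gamma1, gamma2, gamma3, gamma4, gamma5, e; simpl; ring|]).
    lia. }
  split.
  - intros [_ H].
    assert (H' : forall i, (1 <= i <= 12)%nat -> isN (gamma k1 k2 k3 k4 k5 i)) by exact H.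
    pose proof (H' 1%nat ltac:(lia)) as A1. pose proof (H' 2%nat ltac:(lia)) as A2.
    pose proof (H' 3%nat ltac:(lia)) as A3. pose proof (H' 4%nat ltac:(lia)) as A4.
    pose proof (H' 5%nat ltac:(lia)) as A5. pose proof (H' 8%nat ltac:(lia)) as A8.
    pose proof (H' 9%nat ltac:(lia)) as A9. pose proof (H' 10%nat ltac:(lia)) as A10.
    pose proof (H' 11%nat ltac:(lia)) as A11. pose proof (H' 12%nat ltac:(lia)) as A12.
    rewrite G in A1, A2, A3, A4, A5, A8, A9, A10, A11, A12 by lia.
    simpl in *. tauto.
  - intros (H1&H2&H3&H4&H5&H6&H7&H8&H9&H10). split.
    + exists (k1 + k2 + k3 + 2 * k4 + 2 * k5). intros v Hv.
      unfold vertex_sum.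
      do 9 (destruct v as [|v]; [try lia; simpl; rewrite !G by lia; simpl; ring|]).
      lia.
    + intros i Hi. rewrite G by lia.
      do 12 (destruct i as [|i]; [try lia; assumption|]). assumption.
Qed.

Ltac pushZ :=
  repeat first [ rewrite <- plus_IZR | rewrite <- minus_IZR | rewrite <- opp_IZR
               | rewrite <- mult_IZR | rewrite Rmin_IZR ].

Lemma key h z1 z2 z3 z4 z5 :
  (in_S (gamma (IZR z1) (IZR z2) (IZR z3) (IZR z4) (IZR z5)) /\
   Pprop h (IZR z1) (IZR z2) (IZR z3) (IZR z4) (IZR z5)) <->
  Forall isN (lvals h (IZR z1) (IZR z2) (IZR z3) (IZR z4) (IZR z5)).
Proof.
  rewrite inS_R. destruct h; unfold Pprop, lvals; rewrite Forall5; pushZ;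
  rewrite ?isN_IZR, ?isP_IZR, ?Rlt_IZR_iff, ?Rge_IZR_iff;
  split; intros; lia.
Qed.

Ltac zw := repeat progress rewrite ?plus_IZR, ?minus_IZR, ?opp_IZR, ?mult_IZR; lra.

Lemma getZ x : isN x -> exists z, x = IZR z.
Proof. intros [n Hn]. exists (Z.of_nat n). rewrite Hn. apply INR_IZR_INZ. Qed.

Theorem mainTheorem6 :
  forall (h : hcase) (k1 k2 k3 k4 k5 : R),
    (in_S (gamma k1 k2 k3 k4 k5) /\ Pprop h k1 k2 k3 k4 k5) <->
    Forall isN (lvals h k1 k2 k3 k4 k5).
Proof.
  intros h k1 k2 k3 k4 k5.
  assert (HZ : (in_S (gamma k1 k2 k3 k4 k5) /\ Pprop h k1 k2 k3 k4 k5) \/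
               Forall isN (lvals h k1 k2 k3 k4 k5) ->
               exists z1 z2 z3 z4 z5, k1 = IZR z1 /\ k2 = IZR z2 /\ k3 = IZR z3
                 /\ k4 = IZR z4 /\ k5 = IZR z5).
  { intros [[_ HP]|HF].
    - destruct HP as (H1&H2&H3&H4&H5).
      apply getZ in H1 as [z1 ->]. apply getZ in H2 as [z2 ->].
      apply getZ in H3 as [z3 ->]. apply getZ in H4 as [z4 ->].
      assert (exists z5, k5 = IZR z5) as [z5 ->].
      { destruct h; try (destruct H5 as [[n Hn] _]; exists (- Z.of_nat (S n))%Z;
          rewrite opp_IZR, <- INR_IZR_INZ; lra).
        apply getZ; auto. }
      exists z1, z2, z3, z4, z5; auto.
    - destruct h; unfold lvals in HF; apply Forall5 in HF;
      destruct HF as (H1&H2&H3&H4&H5);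
      apply getZ in H1 as [m1 E1]; apply getZ in H2 as [m2 E2];
      apply getZ in H3 as [m3 E3]; apply getZ in H4 as [m4 E4];
      apply getZ in H5 as [m5 E5].
      + exists m1, m2, m3, m4, m5; auto.
      + exists (m1 + m5 + 1)%Z, m2, m3, (m4 + m5 + 1)%Z, (- m5 - 1)%Z.
        repeat split; zw.
      + set (K4 := (m4 + m5 + 1)%Z). set (K5 := (- (2 * m4) - m5 - 2)%Z).
        exists (m1 + K4)%Z, (m2 - K4 - K5)%Z, (m3 - K4 - K5)%Z, K4, K5.
        unfold K4, K5; repeat split; zw.
      + set (K1 := (m4 + m5 + 1)%Z). set (K5 := (m5 - 2 * K1)%Z).
        exists K1, (m1 - K1 - K5)%Z, (m2 - K1 - K5)%Z, (m3 + K1 + 1)%Z, K5.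
        unfold K5, K1; repeat split; zw.
      + set (K1 := m4). set (K5 := (- m5 - 2 * m4 - 1)%Z).
        exists K1, (m1 - K1 - K5)%Z, (m2 - K1 - K5)%Z, (m3 - K1 - K5)%Z, K5.
        unfold K5, K1; repeat split; zw. }
  split; intro H.
  - destruct (HZ (or_introl H)) as (z1&z2&z3&z4&z5&->&->&->&->&->).
    apply key; auto.
  - destruct (HZ (or_intror H)) as (z1&z2&z3&z4&z5&->&->&->&->&->).
    apply key; auto.
Qed.
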